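(* Let $0<\delta<\frac12$. Let $g\in\mathrm{Diff}_0^3(I)$ and $f\in\mathrm{Diff}_+^{1,\delta}(I)$ be such that $p_\delta(g\circ f)\le C$ for some $C>0$, and let $m$ be the minimum of $f'$ on $I$. Then $\psi=\log(g')$ satisfies $|\psi(t)-\psi(s)|\le \frac{C+p_\delta(f)}{m^\delta}|t-s|^\delta$ for all $s,t\in I$.
   Context: $I=[0,1]$. $\mathrm{Diff}_+^1(I)$ is the set of $C^1$ diffeomorphisms of $I$ fixing $0$ and $1$; $\mathrm{Diff}_+^{1,\delta}(I)$ is the set of $f\in\mathrm{Diff}_+^1(I)$ with $f'$ Hölder of exponent $\delta$. $\mathrm{Diff}_0^3(I)$ is the set of $C^3$ diffeomorphisms $f$ of $I$ fixing $0$ and $1$ with $f'(0)=f'(1)=1$. For $f\in\mathrm{Diff}_+^{1,\delta}(I)$, $p_\delta(f)=|\log(f'(0))|+\sup_{t_1\ne t_2\in I}\frac{|\log(f'(t_2))-\log(f'(t_1))|}{|t_2-t_1|^\delta}$ (a finite number). *)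

(* Defs.v *)
From Stdlib Require Import Reals.
From Coquelicot Require Import Coquelicot.
Open Scope R_scope.

Definition inI (x : R) : Prop := 0 <= x <= 1.

Definition hpow (x d : R) : R := if Rle_dec x 0 then 0 else Rpower x d.

Definition cont_on_I (h : R -> R) : Prop :=
  forall x, inI x -> forall eps, 0 < eps -> exists del, 0 < del /\
    forall y, inI y -> Rabs (y - x) < del -> Rabs (h y - h x) < eps.

Definition deriv_on_I (f df : R -> R) : Prop :=
  forall x, inI x -> forall eps, 0 < eps -> exists del, 0 < del /\
    forall y, inI y -> y <> x -> Rabs (y - x) < del ->
      Rabs ((f y - f x) / (y - x) - df x) < eps.

(* f is in Diff^1_+(I) with derivative df: C^1 on I, fixes 0 and 1,
   and f' > 0 (so f is a C^1 diffeomorphism of I onto itself). *)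
Definition Diff1 (f df : R -> R) : Prop :=
  f 0 = 0 /\ f 1 = 1 /\ deriv_on_I f df /\ cont_on_I df /\
  (forall x, inI x -> 0 < df x).

Definition holder_on_I (h : R -> R) (d : R) : Prop :=
  exists K, forall s t, inI s -> inI t ->
    Rabs (h t - h s) <= K * hpow (Rabs (t - s)) d.

Definition Diff1delta (f df : R -> R) (d : R) : Prop :=
  Diff1 f df /\ holder_on_I df d.

(* g is in Diff^3_0(I): C^3 diffeomorphism of I fixing 0,1 with g'(0)=g'(1)=1;
   dg, d2g, d3g are its first three derivatives on I. *)
Definition Diff03 (g dg d2g d3g : R -> R) : Prop :=
  Diff1 g dg /\ deriv_on_I dg d2g /\ deriv_on_I d2g d3g /\ cont_on_I d3g /\
  dg 0 = 1 /\ dg 1 = 1.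

(* p_delta(f) = |log f'(0)| + sup_{t1 <> t2 in I} |log f'(t2) - log f'(t1)| / |t2-t1|^delta,
   expressed in terms of the derivative df of f. *)
Definition p_delta (df : R -> R) (d : R) : R :=
  Rabs (ln (df 0)) +
  real (Lub_Rbar (fun r => exists t1 t2, inI t1 /\ inI t2 /\ t1 <> t2 /\
          r = Rabs (ln (df t2) - ln (df t1)) / hpow (Rabs (t2 - t1)) d)).

(* Main.v *)
Require Import Defs.
From Stdlib Require Import Reals Lra.
From Coquelicot Require Import Coquelicot.
Open Scope R_scope.

Definition clamp (x : R) : R := Rmax 0 (Rmin 1 x).

Lemma clamp_I x : inI (clamp x).
Proof. unfold clamp, inI, Rmax, Rmin; repeat destruct Rle_dec; lra. Qed.

Lemma clamp_id x : inI x -> clamp x = x.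
Proof. unfold clamp, inI, Rmax, Rmin; intros; repeat destruct Rle_dec; lra. Qed.

Lemma clamp_lip x y : Rabs (clamp y - clamp x) <= Rabs (y - x).
Proof. unfold clamp, Rmax, Rmin; repeat destruct Rle_dec; unfold Rabs;
  repeat destruct Rcase_abs; lra. Qed.

Lemma deriv_cont F DF : deriv_on_I F DF -> cont_on_I F.
Proof.
  intros H x Hx eps He.
  destruct (H x Hx 1 Rlt_0_1) as [d1 [Hd1 H1]].
  set (K := Rabs (DF x) + 1).
  assert (HK : 0 < K) by (unfold K; pose proof (Rabs_pos (DF x)); lra).
  exists (Rmin d1 (eps / K)). split.
  { apply Rmin_pos; auto. apply Rdiv_lt_0_compat; lra. }
  intros y Hy Hyx.
  destruct (Req_dec y x) as [->|Hne].
  { rewrite Rminus_diag, Rabs_R0; lra. }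
  assert (Hlt1 : Rabs (y - x) < d1) by (eapply Rlt_le_trans; [exact Hyx| apply Rmin_l]).
  assert (Hlt2 : Rabs (y - x) < eps / K) by (eapply Rlt_le_trans; [exact Hyx| apply Rmin_r]).
  specialize (H1 y Hy Hne Hlt1).
  assert (Hq : Rabs ((F y - F x) / (y - x)) <= K).
  { unfold K. replace ((F y - F x) / (y - x)) with (((F y - F x) / (y - x) - DF x) + DF x) by ring.
    eapply Rle_trans; [apply Rabs_triang|]. lra. }
  assert (Hyx0 : y - x <> 0) by lra.
  replace (F y - F x) with ((F y - F x) / (y - x) * (y - x)) by (field; auto).
  rewrite Rabs_mult.
  assert (0 < Rabs (y - x)) by (apply Rabs_pos_lt; auto).
  apply Rle_lt_trans with (K * Rabs (y - x)).
  { apply Rmult_le_compat_r; lra. }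
  apply Rmult_lt_reg_r with (/ K). apply Rinv_0_lt_compat; lra.
  replace (K * Rabs (y - x) * / K) with (Rabs (y - x)) by (field; lra).
  exact Hlt2.
Qed.

Lemma cont_ext h : cont_on_I h -> forall x, continuity_pt (fun y => h (clamp y)) x.
Proof.
  intros H x eps He.
  destruct (H (clamp x) (clamp_I x) eps He) as [d [Hd Hdd]].
  exists d; split; auto.
  intros y [_ Hy]. unfold R_dist in *. simpl in *. unfold R_dist in *.
  apply Hdd. apply clamp_I.
  eapply Rle_lt_trans; [apply clamp_lip|]. exact Hy.
Qed.

Lemma deriv_ext F DF : deriv_on_I F DF -> forall x, 0 < x < 1 ->
  is_derive (fun y => F (clamp y)) x (DF x).
Proof.
  intros H x Hx. apply is_derive_Reals. intros eps He.
  assert (HxI : inI x) by (unfold inI; lra).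
  destruct (H x HxI eps He) as [d [Hd Hdd]].
  assert (Hp : 0 < Rmin d (Rmin x (1 - x))) by (repeat apply Rmin_pos; lra).
  exists (mkposreal _ Hp). intros h Hh Hhd. simpl in Hhd.
  assert (Hh1 : Rabs h < d) by (eapply Rlt_le_trans; [exact Hhd| apply Rmin_l]).
  assert (Hh2 : Rabs h < Rmin x (1 - x)) by (eapply Rlt_le_trans; [exact Hhd| apply Rmin_r]).
  assert (Hh3 : Rabs h < x) by (eapply Rlt_le_trans; [exact Hh2| apply Rmin_l]).
  assert (Hh4 : Rabs h < 1 - x) by (eapply Rlt_le_trans; [exact Hh2| apply Rmin_r]).
  assert (HI : inI (x + h)) by (unfold inI; revert Hh3 Hh4; unfold Rabs; destruct Rcase_abs; lra).
  rewrite (clamp_id _ HI), (clamp_id _ HxI).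
  replace h with ((x + h) - x) at 2 by ring.
  apply Hdd; auto. lra. replace (x + h - x) with h by ring. auto.
Qed.

Lemma MVT_I F DF a b : deriv_on_I F DF -> inI a -> inI b ->
  exists c, inI c /\ Rmin a b <= c <= Rmax a b /\ F b - F a = DF c * (b - a).
Proof.
  intros H Ha Hb.
  destruct (MVT_gen (fun y => F (clamp y)) a b DF) as [c [Hc Hc2]].
  - intros x Hx. apply deriv_ext; auto.
    unfold inI, Rmin, Rmax in *. destruct Rle_dec; lra.
  - intros x _. apply cont_ext. eapply deriv_cont; eauto.
  - exists c. rewrite (clamp_id _ Ha), (clamp_id _ Hb) in Hc2. repeat split; auto.
    all: unfold inI, Rmin, Rmax in *; destruct Rle_dec; lra.
Qed.

Lemma bounded_I h : cont_on_I h -> exists M, forall x, inI x -> Rabs (h x) <= M.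
Proof.
  intros H.
  destruct (continuity_ab_maj (fun y => h (clamp y)) 0 1) as [a [Ha Ha2]]; [lra| intros; apply cont_ext; auto|].
  destruct (continuity_ab_min (fun y => h (clamp y)) 0 1) as [b [Hb Hb2]]; [lra| intros; apply cont_ext; auto|].
  exists (Rabs (h (clamp a)) + Rabs (h (clamp b))). intros x Hx.
  specialize (Ha x Hx). specialize (Hb x Hx). simpl in *. rewrite (clamp_id _ Hx) in *.
  unfold Rabs; repeat destruct Rcase_abs; lra.
Qed.

Lemma minpos_I h : cont_on_I h -> (forall x, inI x -> 0 < h x) ->
  exists c, 0 < c /\ forall x, inI x -> c <= h x.
Proof.
  intros H Hp.
  destruct (continuity_ab_min (fun y => h (clamp y)) 0 1) as [b [Hb Hb2]]; [lra| intros; apply cont_ext; auto|].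
  exists (h (clamp b)). split. apply Hp, clamp_I.
  intros x Hx. specialize (Hb x Hx). simpl in Hb. rewrite (clamp_id _ Hx) in Hb. auto.
Qed.

Lemma deriv_unique F D1 D2 : deriv_on_I F D1 -> deriv_on_I F D2 -> forall x, inI x -> D1 x = D2 x.
Proof.
  intros H1 H2 x Hx. destruct (Req_dec (D1 x) (D2 x)) as [|Hne]; auto. exfalso.
  set (e := Rabs (D1 x - D2 x) / 2).
  assert (He : 0 < e) by (unfold e; assert (0 < Rabs (D1 x - D2 x)) by (apply Rabs_pos_lt; lra); lra).
  destruct (H1 x Hx e He) as [d1 [Hd1 K1]].
  destruct (H2 x Hx e He) as [d2 [Hd2 K2]].
  set (h := Rmin (Rmin d1 d2) (1/2) / 2).
  assert (Hh : 0 < h) by (unfold h; apply Rdiv_lt_0_compat; [repeat apply Rmin_pos|]; lra).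
  assert (Hh1 : h < d1) by (unfold h in *; pose proof (Rmin_l (Rmin d1 d2) (1/2)); pose proof (Rmin_l d1 d2); lra).
  assert (Hh2 : h < d2) by (unfold h in *; pose proof (Rmin_l (Rmin d1 d2) (1/2)); pose proof (Rmin_r d1 d2); lra).
  assert (Hh3 : h <= 1/4) by (unfold h; pose proof (Rmin_r (Rmin d1 d2) (1/2)); lra).
  set (y := if Rle_dec x (1/2) then x + h else x - h).
  assert (Hy : inI y) by (unfold y, inI in *; destruct Rle_dec; lra).
  assert (Hyx : y <> x) by (unfold y; destruct Rle_dec; lra).
  assert (Ha : Rabs (y - x) = h) by (unfold y; destruct Rle_dec;
     [replace (x + h - x) with h by ring | replace (x - h - x) with (-h) by ring; rewrite Rabs_Ropp];
     apply Rabs_right; lra).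
  specialize (K1 y Hy Hyx ltac:(lra)). specialize (K2 y Hy Hyx ltac:(lra)).
  assert (Rabs (D1 x - D2 x) <= Rabs ((F y - F x) / (y - x) - D1 x) + Rabs ((F y - F x) / (y - x) - D2 x)).
  { replace (D1 x - D2 x) with (-((F y - F x) / (y - x) - D1 x) + ((F y - F x) / (y - x) - D2 x)) by ring.
    eapply Rle_trans; [apply Rabs_triang|]. rewrite Rabs_Ropp. lra. }
  unfold e in *. lra.
Qed.

Lemma chain F DF G DG : deriv_on_I F DF -> deriv_on_I G DG ->
  (forall x, inI x -> inI (F x)) ->
  (forall x y, inI x -> inI y -> x <> y -> F x <> F y) ->
  deriv_on_I (fun x => G (F x)) (fun x => DG (F x) * DF x).
Proof.
  intros HF HG HI Hinj x Hx eps He.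
  set (A := DG (F x)). set (B := DF x).
  assert (HA : 0 <= Rabs A) by apply Rabs_pos.
  assert (HB : 0 <= Rabs B) by apply Rabs_pos.
  set (e2 := eps / (2 * (Rabs B + 1))).
  set (e3 := eps / (2 * (Rabs A + 1))).
  assert (He2 : 0 < e2) by (unfold e2; apply Rdiv_lt_0_compat; lra).
  assert (He3 : 0 < e3) by (unfold e3; apply Rdiv_lt_0_compat; lra).
  destruct (HF x Hx 1 Rlt_0_1) as [d1 [Hd1 K1]].
  destruct (HG (F x) (HI x Hx) e2 He2) as [eta [Heta K2]].
  destruct (HF x Hx e3 He3) as [d3 [Hd3 K3]].
  set (d := Rmin (Rmin d1 d3) (eta / (Rabs B + 1))).
  assert (Hd : 0 < d) by (unfold d; repeat apply Rmin_pos; try apply Rdiv_lt_0_compat; lra).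
  exists d. split; auto. intros y Hy Hyx Hyd.
  assert (Hy1 : Rabs (y - x) < d1) by (unfold d in Hyd; pose proof (Rmin_l (Rmin d1 d3) (eta / (Rabs B + 1))); pose proof (Rmin_l d1 d3); lra).
  assert (Hy3 : Rabs (y - x) < d3) by (unfold d in Hyd; pose proof (Rmin_l (Rmin d1 d3) (eta / (Rabs B + 1))); pose proof (Rmin_r d1 d3); lra).
  assert (Hye : Rabs (y - x) < eta / (Rabs B + 1)) by (unfold d in Hyd; pose proof (Rmin_r (Rmin d1 d3) (eta / (Rabs B + 1))); lra).
  specialize (K1 y Hy Hyx Hy1). specialize (K3 y Hy Hyx Hy3).
  set (QF := (F y - F x) / (y - x)) in *.
  assert (HQF : Rabs QF <= Rabs B + 1).
  { replace QF with ((QF - B) + B) by ring. eapply Rle_trans; [apply Rabs_triang|]. fold B in K1. lra. }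
  assert (Hyx0 : y - x <> 0) by lra.
  assert (Hpos : 0 < Rabs (y - x)) by (apply Rabs_pos_lt; auto).
  assert (HFd : Rabs (F y - F x) < eta).
  { replace (F y - F x) with (QF * (y - x)) by (unfold QF; field; auto).
    rewrite Rabs_mult.
    apply Rle_lt_trans with ((Rabs B + 1) * Rabs (y - x)).
    { apply Rmult_le_compat_r; lra. }
    apply Rmult_lt_reg_r with (/ (Rabs B + 1)). apply Rinv_0_lt_compat; lra.
    replace ((Rabs B + 1) * Rabs (y - x) * / (Rabs B + 1)) with (Rabs (y - x)) by (field; lra).
    exact Hye. }
  assert (Hne : F y <> F x) by (apply Hinj; auto).
  specialize (K2 (F y) (HI y Hy) Hne HFd).
  set (QG := (G (F y) - G (F x)) / (F y - F x)) in *.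
  assert (Heq : (G (F y) - G (F x)) / (y - x) = QG * QF).
  { unfold QG, QF. field. split; lra. }
  rewrite Heq. fold A in K2. fold B in K3.
  replace (QG * QF - A * B) with ((QG - A) * QF + A * (QF - B)) by ring.
  eapply Rle_lt_trans; [apply Rabs_triang|]. rewrite !Rabs_mult.
  assert (T1 : Rabs (QG - A) * Rabs QF <= e2 * (Rabs B + 1)).
  { apply Rmult_le_compat; try apply Rabs_pos; lra. }
  assert (T2 : Rabs A * Rabs (QF - B) <= Rabs A * e3).
  { apply Rmult_le_compat_l; lra. }
  assert (T3 : Rabs (QG - A) * Rabs QF < e2 * (Rabs B + 1) \/ Rabs A * Rabs (QF - B) < (Rabs A + 1) * e3).
  { right. apply Rle_lt_trans with (Rabs A * e3); [lra|]. nra. }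
  assert (E2 : e2 * (Rabs B + 1) = eps / 2) by (unfold e2; field; lra).
  assert (E3 : (Rabs A + 1) * e3 = eps / 2) by (unfold e3; field; lra).
  assert (Rabs A * e3 <= (Rabs A + 1) * e3) by nra.
  lra.
Qed.

Lemma ln_lip a b c : 0 < c -> c <= a -> c <= b -> Rabs (ln a - ln b) <= Rabs (a - b) / c.
Proof.
  assert (key : forall a b, 0 < c -> c <= a -> c <= b -> b <= a -> ln a - ln b <= (a - b) / c).
  { intros x y Hc Hx Hy Hxy. rewrite <- ln_div by lra.
    pose proof (exp_ineq1_le (ln (x / y))). rewrite exp_ln in H by (apply Rdiv_lt_0_compat; lra).
    assert (x / y - 1 = (x - y) / y) by (field; lra).
    assert ((x - y) / y <= (x - y) / c).
    { unfold Rdiv. apply Rmult_le_compat_l; [lra|]. apply Rinv_le_contravar; lra. }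
    lra. }
  intros Hc Ha Hb. destruct (Rle_dec b a).
  - assert (ln b <= ln a) by (apply ln_le; lra).
    rewrite Rabs_right by lra. rewrite Rabs_right by lra. apply key; auto.
  - assert (ln a <= ln b) by (apply ln_le; lra).
    rewrite Rabs_left1 by lra. rewrite Rabs_left1 by lra.
    replace (- (ln a - ln b)) with (ln b - ln a) by ring.
    replace (- (a - b)) with (b - a) by ring. apply key; auto; lra.
Qed.

Lemma rpow_ge x d : 0 < x <= 1 -> 0 < d < 1 -> x <= Rpower x d.
Proof.
  intros Hx Hd. unfold Rpower.
  assert (ln x <= 0) by (rewrite <- ln_1; apply ln_le; lra).
  rewrite <- (exp_ln x) at 1 by lra.
  destruct (Req_dec (ln x) 0) as [E|E].
  - rewrite E. replace (d * 0) with 0 by ring. lra.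
  - left. apply exp_increasing. nra.
Qed.

Lemma hpow_pos x d : 0 < x -> hpow x d = Rpower x d.
Proof. intros. unfold hpow. destruct Rle_dec; lra. Qed.

Lemma hpow_ge0 x d : 0 <= hpow x d.
Proof. unfold hpow. destruct Rle_dec. lra. unfold Rpower. left. apply exp_pos. Qed.

Lemma lub_fin (E : R -> Prop) B e : (forall r, E r -> r <= B) -> E e ->
  exists L, Lub_Rbar E = Finite L /\ (forall r, E r -> r <= L) /\ e <= L.
Proof.
  intros HB He. destruct (Lub_Rbar_correct E) as [Hub Hl].
  assert (Hle : Rbar_le (Lub_Rbar E) B) by (apply Hl; intros r Hr; simpl; auto).
  specialize (Hub e He) as He'.
  destruct (Lub_Rbar E) as [L| |] eqn:Eq; simpl in *; try contradiction.
  exists L. split; [reflexivity|]. split; [|exact He']. intros r Hr. specialize (Hub r Hr). simpl in Hub. exact Hub.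
Qed.

Lemma div_le_of X h Bd : 0 < h -> X <= Bd * h -> X / h <= Bd.
Proof. intros Hh HX. apply Rmult_le_reg_r with h; auto. unfold Rdiv. rewrite Rmult_assoc, Rinv_l by lra. lra. Qed.

Lemma le_of_div X h L : 0 < h -> X / h <= L -> X <= L * h.
Proof. intros Hh HX. replace X with (X / h * h) by (field; lra). apply Rmult_le_compat_r; lra. Qed.

Theorem mainTheorem13 :
  forall (d C m : R) (f df g dg d2g d3g dgf : R -> R),
    0 < d < 1/2 ->
    Diff03 g dg d2g d3g ->
    Diff1delta f df d ->
    deriv_on_I (fun x => g (f x)) dgf ->
    0 < C ->
    p_delta dgf d <= C ->
    (exists x0, inI x0 /\ df x0 = m) ->
    (forall x, inI x -> m <= df x) ->
    forall s t, inI s -> inI t ->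
      Rabs (ln (dg t) - ln (dg s)) <=
        (C + p_delta df d) / Rpower m d * hpow (Rabs (t - s)) d.
Proof.
  intros d C m f df g dg d2g d3g dgf Hd Hg Hf Hgf HC Hp [x0 [Hx0 Hm0]] Hm s t Hs Ht.
  destruct Hg as [[g0 [g1 [Hdg [Hcdg Hdgpos]]]] [Hd2g [Hd3g _]]].
  destruct Hf as [[f0 [f1 [Hdf [Hcdf Hdfpos]]]] [K HK]].
  assert (Hmpos : 0 < m) by (rewrite <- Hm0; auto).
  assert (I0 : inI 0) by (unfold inI; lra).
  assert (I1 : inI 1) by (unfold inI; lra).
  assert (Hlow : forall a b, inI a -> inI b -> m * Rabs (b - a) <= Rabs (f b - f a)).
  { intros a b Ha Hb. destruct (MVT_I f df a b Hdf Ha Hb) as [c [Hc [_ E]]].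
    rewrite E, Rabs_mult. apply Rmult_le_compat_r. apply Rabs_pos.
    rewrite Rabs_right; [apply Hm; auto| left; apply Hdfpos; auto]. }
  assert (Hmono : forall a b, inI a -> inI b -> a <= b -> f a <= f b).
  { intros a b Ha Hb Hab. destruct (MVT_I f df a b Hdf Ha Hb) as [c [Hc [_ E]]].
    specialize (Hdfpos c Hc). nra. }
  assert (HfI : forall x, inI x -> inI (f x)).
  { intros x Hx. pose proof (Hmono 0 x I0 Hx ltac:(unfold inI in Hx; lra)).
    pose proof (Hmono x 1 Hx I1 ltac:(unfold inI in Hx; lra)). unfold inI; lra. }
  assert (Hinj : forall x y, inI x -> inI y -> x <> y -> f x <> f y).
  { intros x y Hx Hy Hxy E. specialize (Hlow x y Hx Hy). rewrite E, Rminus_diag, Rabs_R0 in Hlow.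
    assert (0 < Rabs (y - x)) by (apply Rabs_pos_lt; lra). nra. }
  assert (Hdgf : forall x, inI x -> dgf x = dg (f x) * df x).
  { intros x Hx. apply (deriv_unique (fun x => g (f x)) dgf (fun x => dg (f x) * df x)); auto.
    apply chain; auto. }
  assert (Hsurj : forall t, inI t -> exists x, inI x /\ f x = t).
  { intros t0 Ht0. destruct (IVT_gen (fun y => f (clamp y)) 0 1 t0) as [x [Hx Ex]].
    - intro y. apply cont_ext. eapply deriv_cont; eauto.
    - rewrite (clamp_id 0 I0), (clamp_id 1 I1), f0, f1. unfold Rmin, Rmax, inI in *.
      destruct Rle_dec; lra.
    - assert (HxI : inI x) by (unfold Rmin, Rmax, inI in *; destruct Rle_dec; lra).
      exists x. rewrite (clamp_id x HxI) in Ex. auto. }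
  destruct (bounded_I df Hcdf) as [Mf HMf].
  assert (HMf0 : 0 <= Mf) by (pose proof (HMf 0 I0); pose proof (Rabs_pos (df 0)); lra).
  assert (Hflip : forall a b, inI a -> inI b -> Rabs (f b - f a) <= Mf * Rabs (b - a)).
  { intros a b Ha Hb. destruct (MVT_I f df a b Hdf Ha Hb) as [c [Hc [_ E]]].
    rewrite E, Rabs_mult. apply Rmult_le_compat_r. apply Rabs_pos. auto. }
  destruct (bounded_I d2g (deriv_cont _ _ Hd3g)) as [M2 HM2].
  assert (HM20 : 0 <= M2) by (pose proof (HM2 0 I0); pose proof (Rabs_pos (d2g 0)); lra).
  assert (Hglip : forall a b, inI a -> inI b -> Rabs (dg b - dg a) <= M2 * Rabs (b - a)).
  { intros a b Ha Hb. destruct (MVT_I dg d2g a b Hd2g Ha Hb) as [c [Hc [_ E]]].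
    rewrite E, Rabs_mult. apply Rmult_le_compat_r. apply Rabs_pos. auto. }
  destruct (minpos_I dg Hcdg Hdgpos) as [cg [Hcg Hcgm]].
  assert (Hpsi : forall a b, inI a -> inI b -> Rabs (ln (dg b) - ln (dg a)) <= M2 / cg * Rabs (b - a)).
  { intros a b Ha Hb. eapply Rle_trans. apply (ln_lip _ _ cg); auto.
    unfold Rdiv; replace (M2 * /cg * Rabs (b - a)) with (M2 * Rabs (b - a) * / cg) by ring.
    apply Rmult_le_compat_r; [left; apply Rinv_0_lt_compat; auto| apply Hglip; auto]. }
  assert (HK0 : forall a b, inI a -> inI b -> Rabs (ln (df b) - ln (df a)) <= K / m * hpow (Rabs (b - a)) d).
  { intros a b Ha Hb. eapply Rle_trans. apply (ln_lip _ _ m); auto.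
    unfold Rdiv; replace (K * /m * hpow (Rabs (b - a)) d) with (K * hpow (Rabs (b - a)) d * / m) by ring.
    apply Rmult_le_compat_r; [left; apply Rinv_0_lt_compat; auto| apply HK; auto]. }
  assert (Hhp : forall a b, inI a -> inI b -> a <> b ->
     0 < hpow (Rabs (b - a)) d /\ Rabs (b - a) <= hpow (Rabs (b - a)) d).
  { intros a b Ha Hb Hab. assert (0 < Rabs (b - a)) by (apply Rabs_pos_lt; lra).
    rewrite hpow_pos by auto. split. unfold Rpower; apply exp_pos.
    apply rpow_ge; [|lra]. split; auto. unfold inI in *. unfold Rabs; destruct Rcase_abs; lra. }
  set (Ef := fun r => exists t1 t2, inI t1 /\ inI t2 /\ t1 <> t2 /\
          r = Rabs (ln (df t2) - ln (df t1)) / hpow (Rabs (t2 - t1)) d).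
  assert (Ef0 : Ef (Rabs (ln (df 1) - ln (df 0)) / hpow (Rabs (1 - 0)) d)).
  { exists 0, 1. repeat split; auto; try lra. }
  assert (BEf : forall r, Ef r -> r <= K / m).
  { intros r [t1 [t2 [H1 [H2 [H12 ->]]]]]. destruct (Hhp t1 t2 H1 H2 H12).
    apply div_le_of; auto. }
  destruct (lub_fin Ef (K / m) _ BEf Ef0) as [Lf [ELf [HLf HLf0]]].
  assert (Hpf : p_delta df d = Rabs (ln (df 0)) + Lf) by (unfold p_delta; fold Ef; rewrite ELf; reflexivity).
  assert (HLfpos : 0 <= Lf).
  { eapply Rle_trans; [|exact HLf0]. unfold Rdiv. apply Rmult_le_pos. apply Rabs_pos.
    left. apply Rinv_0_lt_compat. destruct (Hhp 0 1 I0 I1); auto; lra. }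
  set (Eg := fun r => exists t1 t2, inI t1 /\ inI t2 /\ t1 <> t2 /\
          r = Rabs (ln (dgf t2) - ln (dgf t1)) / hpow (Rabs (t2 - t1)) d).
  assert (Eg0 : Eg (Rabs (ln (dgf 1) - ln (dgf 0)) / hpow (Rabs (1 - 0)) d)).
  { exists 0, 1. repeat split; auto; try lra. }
  assert (Hlndgf : forall x, inI x -> ln (dgf x) = ln (dg (f x)) + ln (df x)).
  { intros x Hx. rewrite Hdgf by auto. apply ln_mult; auto. }
  assert (BEg : forall r, Eg r -> r <= M2 / cg * Mf + K / m).
  { intros r [t1 [t2 [H1 [H2 [H12 ->]]]]]. destruct (Hhp t1 t2 H1 H2 H12) as [Hh1 Hh2].
    apply div_le_of; auto.
    rewrite !Hlndgf by auto.
    replace (ln (dg (f t2)) + ln (df t2) - (ln (dg (f t1)) + ln (df t1))) with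
      ((ln (dg (f t2)) - ln (dg (f t1))) + (ln (df t2) - ln (df t1))) by ring.
    eapply Rle_trans; [apply Rabs_triang|].
    pose proof (Hpsi (f t1) (f t2) (HfI _ H1) (HfI _ H2)).
    pose proof (Hflip t1 t2 H1 H2). pose proof (HK0 t1 t2 H1 H2).
    assert (0 <= M2 / cg) by (unfold Rdiv; apply Rmult_le_pos; [lra| left; apply Rinv_0_lt_compat; lra]).
    assert (M2 / cg * Rabs (f t2 - f t1) <= M2 / cg * (Mf * hpow (Rabs (t2 - t1)) d)).
    { apply Rmult_le_compat_l; auto. eapply Rle_trans; [exact H0|]. apply Rmult_le_compat_l; auto. }
    lra. }
  destruct (lub_fin Eg _ _ BEg Eg0) as [Lg [ELg [HLg _]]].
  assert (Hpg : p_delta dgf d = Rabs (ln (dgf 0)) + Lg) by (unfold p_delta; fold Eg; rewrite ELg; reflexivity).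
  assert (HLgC : Lg <= C) by (pose proof (Rabs_pos (ln (dgf 0))); lra).
  destruct (Hsurj t Ht) as [x [Hx <-]]. destruct (Hsurj s Hs) as [y [Hy <-]].
  assert (HRm : 0 < Rpower m d) by (unfold Rpower; apply exp_pos).
  assert (Hpf0 : 0 <= p_delta df d) by (rewrite Hpf; pose proof (Rabs_pos (ln (df 0))); lra).
  destruct (Req_dec x y) as [<-|Hxy].
  { rewrite Rminus_diag, Rabs_R0. apply Rmult_le_pos; [|apply hpow_ge0].
    unfold Rdiv; apply Rmult_le_pos; [lra| left; apply Rinv_0_lt_compat; auto]. }
  destruct (Hhp y x Hy Hx (not_eq_sym Hxy)) as [Hh1 _].
  assert (Ag : Rabs (ln (dgf x) - ln (dgf y)) <= C * hpow (Rabs (x - y)) d).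
  { eapply Rle_trans. apply le_of_div; [exact Hh1|]. apply HLg. exact (ex_intro _ y (ex_intro _ x (conj Hy (conj Hx (conj (not_eq_sym Hxy) eq_refl))))).
   
    apply Rmult_le_compat_r; lra. }
  assert (Af : Rabs (ln (df x) - ln (df y)) <= p_delta df d * hpow (Rabs (x - y)) d).
  { eapply Rle_trans. apply le_of_div; [exact Hh1|]. apply HLf. exact (ex_intro _ y (ex_intro _ x (conj Hy (conj Hx (conj (not_eq_sym Hxy) eq_refl))))).
   
    apply Rmult_le_compat_r; [lra|]. rewrite Hpf. pose proof (Rabs_pos (ln (df 0))); lra. }
  assert (E1 : ln (dg (f x)) - ln (dg (f y)) = (ln (dgf x) - ln (dgf y)) - (ln (df x) - ln (df y))).
  { rewrite !Hlndgf by auto. ring. }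
  rewrite E1.
  assert (Hxy0 : 0 < Rabs (x - y)) by (apply Rabs_pos_lt; lra).
  assert (Hfxy : m * Rabs (x - y) <= Rabs (f x - f y)) by (apply Hlow; auto).
  assert (Hfp : 0 < Rabs (f x - f y)) by nra.
  assert (Hpow : hpow (Rabs (x - y)) d * Rpower m d <= hpow (Rabs (f x - f y)) d).
  { rewrite !hpow_pos by auto. rewrite Rpower_mult_distr by auto.
    apply Rle_Rpower_l; [lra|]. split; [nra|]. lra. }
  assert (Hpow2 : hpow (Rabs (x - y)) d <= hpow (Rabs (f x - f y)) d / Rpower m d).
  { apply Rmult_le_reg_r with (Rpower m d); auto. unfold Rdiv. rewrite Rmult_assoc, Rinv_l by lra. lra. }
  eapply Rle_trans. unfold Rminus at 1. eapply Rle_trans; [apply Rabs_triang|].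
  rewrite Rabs_Ropp. apply Rplus_le_compat; [exact Ag| exact Af].
  replace ((C + p_delta df d) / Rpower m d * hpow (Rabs (f x - f y)) d) with
    ((C + p_delta df d) * (hpow (Rabs (f x - f y)) d / Rpower m d)) by (field; lra).
  rewrite <- Rmult_plus_distr_r. apply Rmult_le_compat_l; lra.
Qed.
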